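(* For any integer $\delta$ and any bipartition $\lambda$, $\delta$ equals the number of vertices labelled $\times$ minus the number of vertices labelled $\bigcirc$ in the weight diagram $x_\lambda(\delta)$.
   Context: A partition is a weakly decreasing sequence $\alpha=(\alpha_1,\alpha_2,\dots)$ of nonnegative integers, almost all zero. A bipartition is a pair $\lambda=(\lambda^\bullet,\lambda^\circ)$ of partitions. Set $I_\wedge(\lambda)=\{\lambda^\bullet_i-(i-1): i\ge1\}$ and $I_\vee(\lambda,\delta)=\{i-\delta-\lambda^\circ_i: i\ge1\}$. The weight diagram $x_\lambda(\delta)$ labels each integer $j$ by: - $\bigcirc$ if $j\notin I_\wedge(\lambda)\cup I_\vee(\lambda,\delta)$; - $\wedge$ if $j\in I_\wedge(\lambda)\setminus I_\vee(\lambda,\delta)$; - $\vee$ if $j\in I_\vee(\lambda,\delta)\setminus I_\wedge(\lambda)$; - $\times$ if $j\in I_\wedge(\lambda)\cap I_\vee(\lambda,\delta)$. (Only finitely many vertices are labelled $\times$ or $\bigcirc$.) *)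

(* Defs.v *)
From mathcomp Require Import all_boot all_order all_algebra.
Set Implicit Arguments. Unset Strict Implicit. Unset Printing Implicit Defensive.
Import GRing.Theory Num.Theory.
Local Open Scope ring_scope.

(* A partition alpha = (alpha_1, alpha_2, ...) is represented by a finite
   sequence s : seq nat, weakly decreasing, with alpha_(i+1) = nth 0 s i
   (all entries beyond size s are 0). *)
Definition is_partition (s : seq nat) : Prop := sorted geq s.

Definition part (s : seq nat) (i : nat) : nat := nth 0%N s i.-1.

(* A bipartition lambda = (lambda^bullet, lambda^circ). *)
Definition bipartition := (seq nat * seq nat)%type.
Definition is_bipartition (lam : bipartition) : Prop :=
  is_partition lam.1 /\ is_partition lam.2.

Definition in_I_wedge (lam : bipartition) (j : int) : Prop :=
  exists i : nat, (1 <= i)%N /\ j = (part lam.1 i)%:Z - (i.-1)%:Z.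

Definition in_I_vee (lam : bipartition) (delta : int) (j : int) : Prop :=
  exists i : nat, (1 <= i)%N /\ j = i%:Z - delta - (part lam.2 i)%:Z.

Inductive label := Circ | Wedge | Vee | Cross.

Definition has_label (lam : bipartition) (delta : int) (j : int) (l : label)
  : Prop :=
  match l with
  | Circ  => ~ in_I_wedge lam j /\ ~ in_I_vee lam delta j
  | Wedge => in_I_wedge lam j /\ ~ in_I_vee lam delta j
  | Vee   => ~ in_I_wedge lam j /\ in_I_vee lam delta j
  | Cross => in_I_wedge lam j /\ in_I_vee lam delta j
  end.

(* Main.v *)
Require Import Defs.
From mathcomp Require Import all_boot all_order all_algebra zify.
Local Open Scope ring_scope.
Set Implicit Arguments.

Lemma nth_mono s i i' : sorted geq s -> (i <= i')%N -> (nth 0 s i' <= nth 0 s i)%N.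
Proof.
move=> ss le; case: (ltnP i' (size s)) => h; last by rewrite nth_default.
have tr : transitive geq by move=> x y z /= h1 h2; lia.
have := @sorted_leq_nth _ _ tr (fun x => leqnn x) 0%N s ss i i'.
rewrite !inE /=; apply => //; lia.
Qed.

Lemma part_head s i : sorted geq s -> (part s i <= head 0%N s)%N.
Proof.
move=> ss; rewrite /part; have := @nth_mono s 0 i.-1 ss (leq0n _).
by case: s ss.
Qed.

Lemma part_big s i : (size s < i)%N -> part s i = 0%N.
Proof. by move=> h; rewrite /part nth_default //; lia. Qed.

Definition aa (s : seq nat) (i : nat) : int := (part s i)%:Z - (i.-1)%:Z.
Definition bb (s : seq nat) (d : int) (i : nat) : int := i%:Z - d - (part s i)%:Z.

Lemma aa_lt s i i' : sorted geq s -> (1 <= i)%N -> (i < i')%N -> aa s i' < aa s i.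
Proof.
move=> ss h1 h2; have := @nth_mono s i.-1 i'.-1 ss ltac:(lia).
rewrite /aa /part => h; lia.
Qed.

Lemma bb_lt s d i i' : sorted geq s -> (1 <= i)%N -> (i < i')%N -> bb s d i < bb s d i'.
Proof.
move=> ss h1 h2; have := @nth_mono s i.-1 i'.-1 ss ltac:(lia).
rewrite /bb /part => h; lia.
Qed.

Lemma memW (M : nat) (j : int) :
  j \in [seq (k%:Z - M%:Z) | k <- iota 0 (2 * M).+1] <-> (- M%:Z <= j) && (j <= M%:Z).
Proof.
split.
  by move/mapP => [k]; rewrite mem_iota => hk ->; lia.
move=> h; apply/mapP; exists (absz (j + M%:Z)); last by lia.
rewrite mem_iota; lia.
Qed.

Lemma uniqW (M : nat) : uniq [seq (k%:Z - M%:Z) | k <- iota 0 (2 * M).+1].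
Proof.
rewrite map_inj_uniq ?iota_uniq //; move=> x y /= h; lia.
Qed.

Lemma wedge_char s (M : nat) j : sorted geq s -> (size s <= M)%N ->
  (exists i, (1 <= i)%N /\ j = aa s i) <->
  (j \in map (aa s) (iota 1 M.+1)) \/ j < - M%:Z.
Proof.
move=> ss hs; split.
  move=> [i [h1 ->]]; case: (leqP i M.+1) => h2.
    by left; apply/mapP; exists i => //; rewrite mem_iota; lia.
  by right; rewrite /aa part_big; lia.
move=> [/mapP [i] | h].
  by rewrite mem_iota => hi ->; exists i; split => //; lia.
exists (absz (1 - j)); split; first by lia.
by rewrite /aa part_big; lia.
Qed.

Lemma vee_char s d (M : nat) j : sorted geq s -> (size s)%:Z <= M%:Z + d ->
  (exists i, (1 <= i)%N /\ j = bb s d i) <->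
  (j \in map (bb s d) (iota 1 (absz (M%:Z + d)))) \/ M%:Z < j.
Proof.
move=> ss hs; split.
  move=> [i [h1 ->]]; case: (leqP i (absz (M%:Z + d))) => h2.
    by left; apply/mapP; exists i => //; rewrite mem_iota; lia.
  by right; rewrite /bb part_big; lia.
move=> [/mapP [i] | h].
  by rewrite mem_iota => hi ->; exists i; split => //; lia.
exists (absz (j + d)); split; first by lia.
by rewrite /bb part_big; lia.
Qed.

Lemma SA_bnd s (M : nat) j : sorted geq s -> (head 0%N s <= M)%N ->
  j \in map (aa s) (iota 1 M.+1) -> (- M%:Z <= j) && (j <= M%:Z).
Proof.
move=> ss hh /mapP [i]; rewrite mem_iota => hi ->.
have := @part_head s i ss; rewrite /aa => h; lia.
Qed.

Lemma SB_bnd s d (M : nat) j : sorted geq s -> (head 0%N s)%:Z + d <= M%:Z -> 0 <= M%:Z + d ->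
  j \in map (bb s d) (iota 1 (absz (M%:Z + d))) -> (- M%:Z <= j) && (j <= M%:Z).
Proof.
move=> ss hh h0 /mapP [i]; rewrite mem_iota => hi ->.
have := @part_head s i ss; rewrite /bb => h; lia.
Qed.

Lemma uniqA s M : sorted geq s -> uniq (map (aa s) (iota 1 M)).
Proof.
move=> ss; rewrite map_inj_in_uniq ?iota_uniq // => x y; rewrite !mem_iota => hx hy h.
case: (ltngtP x y) => // hxy.
  by have := @aa_lt s x y ss ltac:(lia) hxy; lia.
by have := @aa_lt s y x ss ltac:(lia) hxy; lia.
Qed.

Lemma uniqB s d M : sorted geq s -> uniq (map (bb s d) (iota 1 M)).
Proof.
move=> ss; rewrite map_inj_in_uniq ?iota_uniq // => x y; rewrite !mem_iota => hx hy h.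
case: (ltngtP x y) => // hxy.
  by have := @bb_lt s d x y ss ltac:(lia) hxy; lia.
by have := @bb_lt s d y x ss ltac:(lia) hxy; lia.
Qed.

Theorem corollary2p2 (delta : int) (lam : bipartition) :
  is_bipartition lam ->
  exists sX sO : seq int,
    [/\ uniq sX, uniq sO,
        (forall j : int, j \in sX <-> has_label lam delta j Cross),
        (forall j : int, j \in sO <-> has_label lam delta j Circ)
      & delta = (size sX)%:Z - (size sO)%:Z].
Proof.
case: lam => lb lc [/= sb sc].
set M : nat := (size lb + size lc + head 0%N lb + head 0%N lc + absz delta).+1.
set SA := map (aa lb) (iota 1 M.+1).
set SB := map (bb lc delta) (iota 1 (absz (M%:Z + delta))).
set W := [seq (k%:Z - M%:Z) | k <- iota 0 (2 * M).+1].
have hM0 : 0 <= M%:Z + delta by rewrite /M; lia.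
have hwe : forall j, in_I_wedge (lb, lc) j <-> (j \in SA) \/ j < - M%:Z.
  by move=> j; apply: wedge_char => //; rewrite /M /=; lia.
have hve : forall j, in_I_vee (lb, lc) delta j <-> (j \in SB) \/ M%:Z < j.
  by move=> j; apply: vee_char => //; rewrite /M /=; lia.
have bA : forall j, j \in SA -> (- M%:Z <= j) && (j <= M%:Z).
  by move=> j; apply: SA_bnd => //; rewrite /M; lia.
have bB : forall j, j \in SB -> (- M%:Z <= j) && (j <= M%:Z).
  by move=> j; apply: SB_bnd => //; rewrite /M; lia.
have uA : uniq SA by apply: uniqA.
have uB : uniq SB by apply: uniqB.
have uW : uniq W by apply: uniqW.
have hW : forall j, (j \in W) = (- M%:Z <= j) && (j <= M%:Z).
  by move=> j; apply/idP/idP => h; apply/memW.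
exists (filter (mem SB) SA), (filter (fun j => (j \notin SA) && (j \notin SB)) W).
split.
- by rewrite filter_uniq.
- by rewrite filter_uniq.
- move=> j; rewrite mem_filter /= hwe hve; split.
    by move/andP => [hB hA]; split; left.
  move=> [[hA|hA] [hB|hB]]; first by rewrite hA hB.
  + by have := bA _ hA; lia.
  + by have := bB _ hB; lia.
  + lia.
- move=> j; rewrite mem_filter /= hwe hve hW; split.
    move/andP => [/andP [nA nB] hj]; split.
      by move=> [hA|hA]; [rewrite hA in nA | lia].
    by move=> [hB|hB]; [rewrite hB in nB | lia].
  move=> [nA nB]; apply/andP; split.
    by apply/andP; split; apply/negP => h; [apply: nA | apply: nB]; left.
  have h1 : ~ (j < - M%:Z) by move=> h; apply: nA; right.
  have h2 : ~ (M%:Z < j) by move=> h; apply: nB; right.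
  lia.
- have pA : perm_eq SA (filter (mem SA) W).
    apply: uniq_perm => //; first by rewrite filter_uniq.
    by move=> j; rewrite mem_filter hW; apply/idP/andP => [h|[]//]; split => //; exact: bA.
  have hsA : size SA = count (mem SA) W by rewrite (perm_size pA) size_filter.
  have hsB : size SB = count (mem SB) W.
    have pB : perm_eq SB (filter (mem SB) W).
      apply: uniq_perm => //; first by rewrite filter_uniq.
      by move=> j; rewrite mem_filter hW; apply/idP/andP => [h|[]//]; split => //; exact: bB.
    by rewrite (perm_size pB) size_filter.
  rewrite !size_filter (permP pA) count_filter.
  have e1 := count_predUI (mem SA) (mem SB) W.
  have e2 := count_predC (predU (mem SA) (mem SB)) W.
  have e3 : count (fun j => (j \notin SA) && (j \notin SB)) W
          = count (predC (predU (mem SA) (mem SB))) W.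
    by apply: eq_count => j /=; rewrite negb_or.
  have e4 : count (predI (mem SB) (mem SA)) W = count (predI (mem SA) (mem SB)) W.
    by apply: eq_count => j /=; rewrite andbC.
  rewrite e3 e4.
  have szA : size SA = M.+1 by rewrite size_map size_iota.
  have szB : size SB = absz (M%:Z + delta) by rewrite size_map size_iota.
  have szW : size W = (2 * M).+1 by rewrite size_map size_iota.
  rewrite szA in hsA; rewrite szB in hsB; rewrite szW in e2.
  move: e1 e2 hsA hsB hM0.
  set c1 := count (predU _ _) W; set c2 := count (predI _ _) W; set c3 := count (mem SA) W; set c4 := count (mem SB) W; set c5 := count (predC _) W.
  clearbody c1 c2 c3 c4 c5 M.
  lia.
Qed.
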